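(* Let $r$ be a prime power and let $k,m$ be positive integers satisfying $\frac{r^k-1}{r-1}=\frac{m}{\gcd(m,r-1)}$. Let $h(x)\in\mathbb{F}_r[x]$ be a monic factor of the cyclotomic polynomial $\Phi_m(x)$ (viewed in $\mathbb{F}_r[x]$) that is irreducible over $\mathbb{F}_r$. Then $\deg h=k$, and the cyclic $[m,k]_r$ code with parity-check polynomial $h(x)$ is equidistant, with every nonzero codeword having Hamming weight $m\cdot\frac{r^k-r^{k-1}}{r^k-1}$.
   Context: $\Phi_m(x)=\prod_{d\mid m}(x^d-1)^{\mu(m/d)}$ is the $m$-th cyclotomic polynomial ($\mu$ the Möbius function); it has integer coefficients and is reduced modulo the characteristic to give an element of $\mathbb{F}_r[x]$; it divides $x^m-1$. Identify $\mathbb{F}_r^m$ with $\mathbb{F}_r[x]/(x^m-1)$ via $(c_0,\dots,c_{m-1})\leftrightarrow\sum c_ix^i$; a cyclic code is an ideal of this ring. For a monic divisor $h(x)$ of $x^m-1$, the cyclic code with parity-check polynomial $h(x)$ is the ideal generated by $g(x)=(x^m-1)/h(x)$; its dimension is $\deg h$. An $[m,k]_r$ code is a $k$-dimensional subspace of $\mathbb{F}_r^m$. The Hamming weight of a vector is its number of nonzero entries; a code is equidistant if all pairs of distinct codewords have the same Hamming distance. *)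

(* Defs.v *)
From mathcomp Require Import all_boot all_order all_algebra all_field.
Set Implicit Arguments. Unset Strict Implicit. Unset Printing Implicit Defensive.
Import GRing.Theory.
Local Open Scope ring_scope.

(* Codewords (c_0,...,c_{m-1}) are identified with polynomials of size <= m
   (representatives of F[x]/(x^m - 1)). *)

Definition hweight (F : fieldType) (m : nat) (c : {poly F}) : nat :=
  #|[set i : 'I_m | c`_i != 0]|.

Definition hdist (F : fieldType) (m : nat) (c1 c2 : {poly F}) : nat :=
  #|[set i : 'I_m | c1`_i != c2`_i]|.

(* The cyclic code of length m with parity-check polynomial h: the ideal of
   F[x]/(x^m-1) generated by g = (x^m-1)/h, i.e. the set of reductions
   (a * g) mod (x^m - 1). *)
Definition cyclic_code (F : fieldType) (m : nat) (h : {poly F}) (c : {poly F}) : Prop :=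
  exists a : {poly F}, c = (a * (('X^m - 1) %/ h)) %% ('X^m - 1).

(* Main.v *)
Require Import Defs.
From mathcomp Require Import all_boot all_order all_algebra all_field.
From mathcomp Require Import ring zify.
Import GRing.Theory.
Local Open Scope ring_scope.
Import Pdiv.Field.

Section Cyc.
Variable F : fieldType.

Lemma Xn1_prod n : (0 < n)%N ->
  'X^n - 1 = \prod_(d <- divisors n) map_poly (intr : int -> F) 'Phi_d.
Proof.
move=> n0; have := congr1 (map_poly (intr : int -> F)) (prod_Cyclotomic n0).
by rewrite rmorph_prod rmorphB /= map_polyXn rmorph1 => ->.
Qed.

Lemma Phi_dvd_Xn1 n d : (0 < n)%N -> (d %| n)%N ->
  map_poly (intr : int -> F) 'Phi_d %| 'X^n - 1.
Proof.
move=> n0 dn; rewrite (@Xn1_prod _ n0) (bigD1_seq d) ?divisors_uniq //=.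
  exact: dvdp_mulIl.
by rewrite -dvdn_divisors.
Qed.

Lemma Phi_coprime n d : (0 < n)%N -> n%:R != 0 :> F -> (d %| n)%N -> d != n ->
  coprimep (map_poly (intr : int -> F) 'Phi_n) (map_poly (intr : int -> F) 'Phi_d).
Proof.
move=> n0 nF dn dNn; apply: (separable_coprime (separable_Xn_sub_1 nF)).
rewrite (@Xn1_prod _ n0) (bigD1_seq n) ?divisors_uniq //=; last by rewrite -dvdn_divisors.
rewrite -big_filter (bigD1_seq d) //=; last first.
  by apply: filter_uniq; apply: divisors_uniq.
  by rewrite mem_filter dNn /= -dvdn_divisors.
by rewrite mulrA dvdp_mulIl.
Qed.
End Cyc.


Lemma card_fibers (T U : finType) (P : pred T) (f : T -> U) :
  #|[set x | P x]| = (\sum_(u : U) #|[set x | P x && (f x == u)]|)%N.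
Proof.
rewrite cardsE -sum1_card (partition_big f xpredT) //=.
by apply: eq_bigr => u _; rewrite cardsE -sum1_card.
Qed.

Lemma card_inj_le (T U : finType) (A : {set T}) (B : {set U}) (f : T -> U) :
  {in A &, injective f} -> (forall x, x \in A -> f x \in B) -> (#|A| <= #|B|)%N.
Proof.
move=> fi fAB; rewrite -(card_in_imset fi); apply: subset_leq_card.
by apply/subsetP => _ /imsetP[x xA ->]; exact: fAB.
Qed.

Lemma card_bij (T U : finType) (A : {set T}) (B : {set U}) (f : T -> U) (g : U -> T) :
  (forall x, x \in A -> f x \in B) -> (forall y, y \in B -> g y \in A) ->
  {in A, cancel f g} -> {in B, cancel g f} -> #|A| = #|B|.
Proof.
move=> fAB gBA fK gK; apply/eqP; rewrite eqn_leq.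
rewrite (@card_inj_le _ _ A B f) ?(@card_inj_le _ _ B A g) //.
  by move=> x y xB yB e; rewrite -(gK x xB) -(gK y yB) e.
by move=> x y xA yA e; rewrite -(fK x xA) -(fK y yA) e.
Qed.

Lemma nat_squeeze (I f M g : nat) : (I * f = M * g -> I <= M -> f <= g -> 0 < g -> 0 < M -> I = M /\ f = g)%N.
Proof.
move=> E IM fg g0 M0.
have Ig : (I * g = M * g)%N.
  apply/eqP; rewrite eqn_leq leq_mul2r IM orbT /= -E leq_mul2l fg orbT //.
have IM' : I = M by apply/eqP; rewrite -(eqn_pmul2r g0) Ig.
by split=> //; apply/eqP; rewrite -(eqn_pmul2l M0) -{1}IM' E.
Qed.

Section K.
Variable F : finFieldType.
Variable h : {poly F}.
Hypothesis hI : monic_irreducible_poly h.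
Local Notation K := {poly %/ h with hI}.
Definition phi : {rmorphism {poly F} -> K} := in_qpoly h.
Definition emb : {rmorphism F -> K} := qpolyC h.
Definition beta : K := phi 'X.

Lemma h_monic : h \is monic. Proof. by case: hI. Qed.
Lemma size_h : (1 < size h)%N. Proof. by case: hI => [[]]. Qed.

Lemma phi_eq0 p : (phi p == 0) = (h %| p).
Proof.
have hM := h_monic.
apply/eqP/idP => [/val_eqP /= | hDp].
  by rewrite -Pdiv.IdomainMonic.modpE mk_monicE.
by apply/val_eqP; rewrite /= -Pdiv.IdomainMonic.modpE mk_monicE.
Qed.

Lemma phi_val (y : K) : phi (val y) = y.
Proof. by apply: val_inj; rewrite /= Pdiv.Ring.rmodp_small // size_mk_monic. Qed.

Lemma val_phi p : val (phi p) = p %% h.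
Proof. by rewrite /= -Pdiv.IdomainMonic.modpE ?mk_monicE ?h_monic. Qed.

Lemma phiC c : phi c%:P = emb c.
Proof.
apply: val_inj; rewrite val_phi /= modp_small // size_polyC.
by apply: leq_ltn_trans size_h; case: (c != 0).
Qed.

Lemma phiX n : phi 'X^n = beta ^+ n.
Proof. by rewrite rmorphXn. Qed.


Variable m : nat.
Hypothesis m0 : (0 < m)%N.
Hypothesis hPhi : h %| map_poly (intr : int -> F) 'Phi_m.
Hypothesis mF : m%:R != 0 :> F.

Lemma beta_Xn1 n : (beta ^+ n == 1) = (h %| 'X^n - 1).
Proof. by rewrite -phi_eq0 rmorphB rmorph1 /= phiX subr_eq0. Qed.

Lemma beta_m : beta ^+ m = 1.
Proof. by apply/eqP; rewrite beta_Xn1 (dvdp_trans hPhi) // Phi_dvd_Xn1. Qed.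

Lemma beta_ord t : (beta ^+ t == 1) = (m %| t)%N.
Proof.
apply/idP/idP; last by case/dvdnP=> q ->; rewrite mulnC exprM beta_m expr1n.
have exP : exists n, (0 < n)%N && (beta ^+ n == 1) by exists m; rewrite m0 beta_m /=.
case: (ex_minnP exP) => o /andP[o0 /eqP bo] omin.
have odiv t' : beta ^+ t' == 1 -> (o %| t')%N.
  move=> /eqP bt; rewrite /dvdn; apply/negPn/negP => nz.
  have := omin (t' %% o)%N; rewrite lt0n nz /= expr_mod // bt eqxx /= => /(_ isT).
  by rewrite leqNgt ltn_pmod.
suff om : o = m by move=> /odiv; rewrite om.
have om : (o %| m)%N by apply: odiv; rewrite beta_m.
apply/eqP; apply/negPn/negP => oNm.
have : h %| 'X^o - 1 by rewrite -beta_Xn1 bo.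
rewrite (@Xn1_prod _ o o0) -phi_eq0 rmorph_prod prodf_seq_eq0 => /hasP[e].
rewrite -dvdn_divisors // => eo /= /[!phi_eq0] he.
have em : (e %| m)%N by apply: dvdn_trans eo om.
have eNm : e != m.
  apply: contra oNm => /eqP ee; rewrite eqn_leq dvdn_leq //= -ee dvdn_leq //.
have := @Phi_coprime _ m e m0 mF em eNm => /(coprimep_dvdl he) /(coprimep_dvdr hPhi).
by rewrite coprimepp => /eqP hs; have := size_h; rewrite hs.
Qed.

Lemma card_pnatF : [pchar F].-nat #|F|.
Proof.
have [p pp pc] := finPcharP F.
have E : #|F| = (p ^ logn p #|F|)%N := card_pprimeChar pc.
by rewrite E pnatX pnatE // pc.
Qed.

Lemma pcharK : [pchar K] =i [pchar F].
Proof. exact: (fmorph_pchar emb). Qed.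

Lemma expf_cardX (c : F) k : c ^+ (#|F| ^ k) = c.
Proof.
elim: k => [|k IH]; first by rewrite expn0 expr1.
by rewrite expnSr exprM IH expf_card.
Qed.

Variable k : nat.
Hypothesis k0 : (0 < k)%N.
Hypothesis hk : (m %| (#|F| ^ k).-1)%N.

Lemma frob_all (y : K) : y ^+ (#|F| ^ k) = y.
Proof.
set q := (#|F| ^ k)%N.
have q0 : (0 < q)%N by rewrite expn_gt0 (ltn_trans _ (finNzRing_gt1 F)).
have cK : [pchar K].-nat q.
  by rewrite (eq_pnat _ pcharK) /q pnatX card_pnatF.
have bq : beta ^+ q = beta.
  rewrite -(prednK q0) exprS.
  by move: (hk); rewrite -beta_ord => /eqP ->; rewrite mulr1.
suff P p : phi p ^+ q = phi p by rewrite -(phi_val y) P.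
elim/poly_ind: p => [|p c IH].
  by rewrite rmorph0 expr0n; case: (q) q0.
rewrite rmorphD rmorphM /= phiC exprDn_pchar // exprMn IH.
by rewrite -/beta bq -rmorphXn expf_cardX.
Qed.

Lemma card_K_le : (#|K| <= #|F| ^ k)%N.
Proof.
set q := (#|F| ^ k)%N.
have q1 : (1 < q)%N.
  rewrite /q -(expn0 #|F|) ltn_exp2l //; exact: finNzRing_gt1.
pose P : {poly K} := 'X^q - 'X.
have sP : size P = q.+1.
  by rewrite /P size_polyDl size_polyXn // size_polyN size_polyX.
have := @max_poly_roots _ P (enum K).
rewrite -cardE sP ltnS; apply.
- by rewrite -size_poly_gt0 sP.
- by apply/allP => y _; rewrite /root /P !hornerE frob_all subrr.
- exact: enum_uniq.
Qed.

Lemma d_le_k : ((size h).-1 <= k)%N.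
Proof.
have := card_K_le; rewrite card_qfpoly leq_exp2l //; exact: finNzRing_gt1.
Qed.


Local Notation g := (gcdn m #|F|.-1).
Local Notation N := (m %/ gcdn m #|F|.-1)%N.
Hypothesis hq : ((#|F| ^ k).-1 = N * #|F|.-1)%N.

Lemma g0 : (0 < g)%N. Proof. by rewrite gcdn_gt0 m0. Qed.
Lemma mNg : m = (N * g)%N. Proof. by rewrite divnK // dvdn_gcdl. Qed.
Lemma N0 : (0 < N)%N.
Proof. by have := m0; rewrite {1}mNg muln_gt0 => /andP[]. Qed.

Definition psi (x : 'I_m * F) : K := emb x.2 * beta ^+ x.1.
Definition fib (y : K) := #|[set x | (x.2 != 0) && (psi x == y)]|.

Lemma beta_neq0 : beta != 0.
Proof.
apply/eqP => b0; have := beta_m; rewrite b0 expr0n.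
by case: (m) m0 => //= _ _ /eqP; rewrite eq_sym oner_eq0.
Qed.

Lemma beta_mod a : beta ^+ (a %% m) = beta ^+ a.
Proof. exact: expr_mod beta_m. Qed.

Lemma psi_neq0 x : x.2 != 0 -> psi x != 0.
Proof. by move=> x0; rewrite mulf_neq0 ?fmorph_eq0 // expf_neq0 // beta_neq0. Qed.

Lemma fib_psi x0 : x0.2 != 0 -> fib (psi x0) = fib 1%R.
Proof.
case: x0 => t0 c0 /= c0n.
pose f (x : 'I_m * F) := (Ordinal (ltn_pmod (x.1 + (m - t0)) m0), x.2 / c0).
pose g' (x : 'I_m * F) := (Ordinal (ltn_pmod (x.1 + t0) m0), x.2 * c0).
have t0m : (t0 <= m)%N by apply: ltnW.
apply: (@card_bij _ _ _ _ f g').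
- move=> [t c]; rewrite !inE /= => /andP[cn /eqP e].
  rewrite mulf_neq0 ?invr_neq0 //=; apply/eqP.
  rewrite /psi /= beta_mod exprD fmorph_div /=.
  move: e; rewrite /psi /= => e.
  have -> : emb c / emb c0 * (beta ^+ t * beta ^+ (m - t0)) =
    (emb c * beta ^+ t) * beta ^+ (m - t0) / emb c0 by ring.
  rewrite e.
  have -> : emb c0 * beta ^+ t0 * beta ^+ (m - t0) / emb c0 =
     (emb c0 / emb c0) * (beta ^+ t0 * beta ^+ (m - t0)) by ring.
  by rewrite -exprD subnKC // beta_m mulr1 mulfV // fmorph_eq0.
- move=> [t c]; rewrite !inE /= => /andP[cn /eqP e].
  rewrite mulf_neq0 //=; apply/eqP.
  move: e; rewrite /psi /= beta_mod exprD rmorphM /= => e.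
  by rewrite mulrACA e mul1r.
- move=> [t c] _; rewrite /f /g' /=; congr pair; last by rewrite divfK.
  by apply: val_inj; rewrite /= modnDml -addnA subnK // modnDr modn_small.
- move=> [t c] _; rewrite /f /g' /=; congr pair; last by rewrite mulfK.
  by apply: val_inj; rewrite /= modnDml -addnA subnKC // modnDr modn_small.
Qed.

Definition Im := [set psi x | x in [set x : 'I_m * F | x.2 != 0]].

Lemma fibE y : fib y = if y \in Im then fib 1%R else 0%N.
Proof.
case: ifP => [/imsetP[x0 /[!inE] x0n ->]|yIm]; first exact: fib_psi.
apply: eq_card0 => x; rewrite !inE; apply/negP => /andP[xn /eqP e].
by move: yIm; rewrite -e imset_f // inE.
Qed.

Lemma expf_pred (c : F) : c != 0 -> c ^+ #|F|.-1 = 1.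
Proof.
move=> cn; apply: (mulIf cn); rewrite mul1r -exprSr prednK ?expf_card //.
exact: ltn_trans (finNzRing_gt1 F).
Qed.

Lemma divN_lt (t : 'I_m) : (t %/ N < g)%N.
Proof. by rewrite ltn_divLR ?N0 // mulnC -mNg. Qed.

Lemma fib1_le : (fib 1%R <= g)%N :> Prop.
Proof.
rewrite -[X in (_ <= X)%N](card_ord g) -cardsT.
apply: (@card_inj_le _ _ _ _ (fun x : 'I_m * F => Ordinal (divN_lt x.1))); last by [].
have key x : x \in [set x | (x.2 != 0) && (psi x == 1)] -> (N %| x.1)%N.
  rewrite inE => /andP[xn /eqP e].
  have : beta ^+ (x.1 * #|F|.-1) == 1.
    have := congr1 (fun z => z ^+ #|F|.-1) e.
    by rewrite /= exprMn -rmorphXn /= expf_pred // rmorph1 mul1r expr1n exprM => ->.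
  rewrite beta_ord => d1.
  have : (m %| gcdn (x.1 * #|F|.-1) (x.1 * m))%N by rewrite dvdn_gcd d1 dvdn_mull.
  by rewrite -muln_gcdr gcdnC {1}mNg (dvdn_pmul2r g0).
move=> x y xA yA /(congr1 val) /= e.
have ex : x.1 = y.1.
  by apply: val_inj; rewrite /= -(divnK (key x xA)) -(divnK (key y yA)) e.
move: xA yA; rewrite !inE /psi ex => /andP[_ /eqP e1] /andP[_ /eqP e2].
have : emb x.2 = emb y.2.
  by apply: (mulIf (expf_neq0 y.1 beta_neq0)); rewrite e1 e2.
move/fmorph_inj; case: x y ex {e e1 e2} => [t1 c1] [t2 c2] /= -> ->; done.
Qed.

Lemma cardA : #|[set x : 'I_m * F | x.2 != 0]| = (m * #|F|.-1)%N.
Proof.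
have -> : [set x : 'I_m * F | x.2 != 0] = setX [set: 'I_m] [set~ (0 : F)].
  by apply/setP => -[t c]; rewrite !inE.
by rewrite cardsX cardsT card_ord cardsC1.
Qed.

Lemma count_main : (#|Im| * fib 1%R = m * #|F|.-1)%N.
Proof.
rewrite -cardA (@card_fibers _ _ _ psi).
rewrite (eq_bigr (fun y => if y \in Im then fib 1%R else 0%N)); last by move=> y _; rewrite -fibE.
by rewrite -big_mkcond /= sum_nat_const.
Qed.

Lemma Im_sub : Im \subset [set~ (0 : K)].
Proof. by apply/subsetP => _ /imsetP[x /[!inE] xn ->]; apply: psi_neq0. Qed.

Lemma main_count : [/\ (size h).-1 = k, fib 1%R = g & Im = [set~ 0]].
Proof.
have r1 : (1 < #|F|)%N := finNzRing_gt1 F.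
have rp : (0 < #|F|.-1)%N by rewrite -subn1 subn_gt0.
have hIm : (#|Im| <= #|K|.-1)%N.
  by apply: leq_trans (subset_leq_card Im_sub) _; rewrite cardsC1.
have hKk : (#|K|.-1 <= (#|F| ^ k).-1)%N by rewrite -!subn1 leq_sub2r // card_K_le.
have E : (#|Im| * fib 1%R = N * #|F|.-1 * g)%N by rewrite count_main mulnAC -mNg.
have [eIm f1] := nat_squeeze _ _ _ _ E (leq_trans (leq_trans hIm hKk) (eq_leq hq)) fib1_le g0
  (etrans (muln_gt0 _ _) (introT andP (conj N0 rp))).
have dk : (size h).-1 = k.
  apply/eqP; rewrite eqn_leq d_le_k /= -(leq_exp2l _ _ r1) -card_qfpoly.
  have : ((#|F| ^ k).-1 <= #|K|.-1)%N by rewrite hq -eIm.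
  by rewrite -!subn1 leq_sub2rE // (ltnW (card_qfpoly_gt1 hI)).
split=> //; apply/eqP; rewrite eqEcard Im_sub /= cardsC1 eIm -hq card_qfpoly dk //.
Qed.

Local Notation M := ('X^m - 1 : {poly F}).
Definition G := M %/ h.
Definition lamp (p : {poly F}) := ((p * G) %% M)`_0.
Definition lam (y : K) := lamp (val y).

Lemma h_dvd_M : h %| M. Proof. by rewrite -beta_Xn1 beta_m. Qed.
Lemma GhM : G * h = M. Proof. exact: divpK h_dvd_M. Qed.
Lemma size_M : size M = m.+1. Proof. exact: size_Xn_sub_1. Qed.
Lemma M_neq0 : M != 0. Proof. by rewrite -size_poly_gt0 size_M. Qed.
Lemma h_neq0 : h != 0. Proof. by rewrite -size_poly_gt0 (ltnW size_h). Qed.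
Lemma G_neq0 : G != 0.
Proof. by apply/eqP => G0; have := M_neq0; rewrite -GhM G0 mul0r eqxx. Qed.
Lemma size_G : (size G <= m)%N.
Proof.
have := size_M; rewrite -GhM size_mul ?G_neq0 ?h_neq0 // => e.
have := size_h; move: e; case: (size h) => [|[|s]] //= e _; rewrite addnS /= in e; by rewrite -ltnS -e addnS ltnS leq_addr.
Qed.

Lemma lampD p q : lamp (p + q) = lamp p + lamp q.
Proof. by rewrite /lamp mulrDl modpD coefD. Qed.
Lemma lampM c p : lamp (c%:P * p) = c * lamp p.
Proof. by rewrite /lamp -mulrA mul_polyC modpZl coefZ. Qed.
Lemma lamp_mod p : lamp p = lamp (p %% h).
Proof.
rewrite {1}(divp_eq p h) lampD /lamp -mulrA [h * G]mulrC GhM modp_mull coef0 add0r //.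
Qed.
Lemma lam_phi p : lam (phi p) = lamp p.
Proof. by rewrite /lam val_phi -lamp_mod. Qed.
Lemma lamM c y : lam (emb c * y) = c * lam y.
Proof. by rewrite -(phi_val y) -phiC -rmorphM !lam_phi lampM. Qed.
Lemma lamD y z : lam (y + z) = lam y + lam z.
Proof. by rewrite -(phi_val y) -(phi_val z) -rmorphD !lam_phi lampD. Qed.
Lemma lam0 : lam 0 = 0.
Proof. by have := lamD 0 0; rewrite addr0 => /eqP; rewrite -subr_eq subrr eq_sym => /eqP. Qed.

Lemma coef_shift (c : {poly F}) (i : nat) : (size c <= m)%N -> (i < m)%N ->
  (('X^(m - i) * c) %% M)`_0 = c`_i.
Proof.
move=> sc im.
have E : 'X^(m - i) * c =
   ('X^(m - i) * take_poly i c + drop_poly i c) + drop_poly i c * M.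
  rewrite -{1}(poly_take_drop i c) mulrDr mulrBr mulr1 mulrCA -exprD subnK ?(ltnW im) //.
  by ring.
rewrite E modpD modp_mull addr0 modp_small; last first.
  rewrite size_M ltnS (leq_trans (size_polyD _ _)) // geq_max size_drop_poly.
  rewrite (leq_trans (leq_subr _ _) sc) andbT.
  have [->|tn] := eqVneq (take_poly i c) 0; first by rewrite mulr0 size_poly0.
  rewrite size_mul ?expf_neq0 ?polyX_eq0 // size_polyXn.
  rewrite addSn /=; apply: leq_trans (leq_add (leqnn _) (size_take_poly i c)) _; by rewrite subnK // ltnW.
by rewrite coefD coefXnM subn_gt0 im coef_drop_poly add0n add0r.
Qed.

Lemma code_coef a (i : nat) : (i < m)%N ->
  ((a * G) %% M)`_i = lam (beta ^+ (m - i) * phi a).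
Proof.
move=> im; rewrite -phiX -rmorphM lam_phi /lamp -mulrA -(modp_mul 'X^(m - i) (a * G)).
rewrite coef_shift // -ltnS -size_M ltn_modp M_neq0 //.
Qed.

Lemma lam_nz : exists y, lam y != 0.
Proof.
have [y Hy|H] := pickP (fun y => lam y != 0); first by exists y.
suff G0 : G = 0 by move: G_neq0; rewrite G0 eqxx.
apply/polyP => i; rewrite coef0.
have [im|mi] := ltnP i m; last by rewrite nth_default // (leq_trans size_G).
rewrite -[G]mul1r -(modp_small (p := 1 * G) (q := M)); last by rewrite mul1r size_M ltnS size_G.
by rewrite code_coef //; apply/eqP; have := H (beta ^+ (m - i) * phi (1 : {poly F})) => /= /negbFE.
Qed.

Lemma card_ker : (#|[set z : K | lam z == 0%R]| * #|F| = #|K|)%N.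
Proof.
have [z0 hz0] := lam_nz.
pose z1 := emb (lam z0)^-1 * z0.
have hz1 : lam z1 = 1 by rewrite /z1 lamM mulVf.
have E := @card_fibers K F predT lam.
rewrite (_ : [set x | predT x] = setT) ?cardsT in E; last by apply/setP => x; rewrite !inE.
rewrite E (eq_bigr (fun _ => #|[set z : K | lam z == 0]|)); last first.
  move=> c _.
  apply: (@card_bij _ _ _ _ (fun z => z - emb c * z1) (fun z => z + emb c * z1)).
  - move=> z; rewrite !inE /= => /eqP e; rewrite lamD -mulNr -rmorphN lamM hz1 e.
    by rewrite mulr1 subrr.
  - move=> z; rewrite !inE /= => /eqP e; rewrite lamD lamM hz1 e mulr1 add0r eqxx.
    by [].
  - by move=> z _; rewrite subrK.
  - by move=> z _; rewrite addrK.
by rewrite sum_nat_const cardT -cardE mulnC.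
Qed.

Lemma weight_eq (al : K) : al != 0 ->
  (#|[set t : 'I_m | lam (beta ^+ t * al)%R != 0%R]| * #|F|.-1 =
    g * #|[set z : K | lam z != 0%R]|)%N.
Proof.
move=> aln; have [dk f1 Imf] := main_count.
pose D := [set x : 'I_m * F | (x.2 != 0) && (lam (psi x * al) != 0)].
have D1 : #|D| = (#|[set t : 'I_m | lam (beta ^+ t * al)%R != 0%R]| * #|F|.-1)%N.
  rewrite -(cardsC1 (0 : F)) -cardsX; apply: eq_card => -[t c]; rewrite !inE /=.
  rewrite /psi /= -mulrA lamM mulf_eq0 negb_or; by case: (c != 0); rewrite ?andbT ?andbF.
have D3 : #|[set y : K | lam (y * al) != 0]| = #|[set z : K | lam z != 0]|.
  apply: (@card_bij _ _ _ _ (fun y => y * al) (fun z => z / al)).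
  - by move=> y; rewrite !inE.
  - by move=> z; rewrite !inE divfK.
  - by move=> y _; rewrite mulfK.
  - by move=> z _; rewrite divfK.
rewrite -D1 -D3 (@card_fibers _ _ _ psi).
rewrite (eq_bigr (fun y => if lam (y * al) != 0 then g else 0%N)); last first.
  move=> y _; case: ifP => Ly.
    have yn : y != 0 by apply: contraNneq Ly => ->; rewrite mul0r lam0 eqxx.
    have fy : fib y = g by rewrite fibE Imf !inE yn f1.
    rewrite -fy /fib.
    apply: eq_card => x; rewrite !inE; case: (psi x =P y) => [->|_]; by rewrite ?Ly ?andbT ?andbF.
  apply: eq_card0 => x; rewrite !inE; case: (psi x =P y) => [->|_]; by rewrite ?Ly ?andbT ?andbF.
rewrite -big_mkcond /= sum_nat_const mulnC; congr (_ * _)%N.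
by rewrite cardsE.
Qed.

Lemma modm_inv (i : nat) : (i < m)%N -> ((m - (m - i) %% m) %% m = i)%N.
Proof.
move=> im; have [->|i0] := posnP i; first by rewrite subn0 modnn subn0 modnn.
rewrite (modn_small (m := (m - i)%N)) ?subKn ?modn_small ?(ltnW im) //.
by rewrite ltn_subrL i0 m0.
Qed.

Lemma hweight_code a : phi a != 0 ->
  (hweight m ((a * G) %% M) * #|F|.-1 = g * #|[set z : K | lam z != 0%R]|)%N.
Proof.
move=> an; rewrite -(weight_eq (phi a) an); congr (_ * _)%N; rewrite /hweight.
pose f (i : 'I_m) : 'I_m := Ordinal (ltn_pmod (m - i) m0).
apply: (@card_bij _ _ _ _ f f).
- by move=> i; rewrite !inE code_coef // beta_mod.
- move=> t; rewrite !inE code_coef //=; last exact: ltn_pmod.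
  by rewrite -[beta ^+ (m - _)]beta_mod modm_inv.
- by move=> i _; apply: val_inj; rewrite /= modm_inv.
- by move=> i _; apply: val_inj; rewrite /= modm_inv.
Qed.
End K.

Theorem corollary3p3 (F : finFieldType) (r k m : nat) :
  r = #|F| -> (0 < k)%N -> (0 < m)%N ->
  ((r ^ k - 1) %/ (r - 1) = m %/ gcdn m (r - 1))%N ->
  forall h : {poly F},
    h \is monic -> h %| map_poly (intr : int -> F) 'Phi_m -> irreducible_poly h ->
    (size h).-1 = k /\
    (forall c1 c2 : {poly F}, cyclic_code m h c1 -> cyclic_code m h c2 -> c1 != c2 ->
       (hdist m c1 c2 * (r ^ k - 1) = m * (r ^ k - r ^ k.-1))%N) /\
    (forall c : {poly F}, cyclic_code m h c -> c != 0 ->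
       (hweight m c * (r ^ k - 1) = m * (r ^ k - r ^ k.-1))%N).
Proof.
move=> -> k0 m0 hyp h hM hPhi hirr.
have hI : monic_irreducible_poly h := (hirr, hM).
have r1 : (1 < #|F|)%N := finNzRing_gt1 F.
rewrite !subn1 in hyp *.
set g := gcdn m #|F|.-1 in hyp *.
set N := (m %/ g)%N in hyp *.
have hq : (#|F| ^ k).-1 = (N * #|F|.-1)%N.
  by rewrite -hyp divnK // dvdn_pred_predX.
have mNg : m = (N * g)%N by rewrite divnK // dvdn_gcdl.
have hk : (m %| (#|F| ^ k).-1)%N.
  by rewrite hq {1}mNg dvdn_mul // dvdn_gcdr.
have mF : m%:R != 0 :> F.
  apply/eqP => mF.
  have [p pp pc] := finPcharP F.
  have E : #|F| = (p ^ logn p #|F|)%N := card_pprimeChar pc.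
  have r0 : (#|F|%:R : F) = 0.
    rewrite E natrX pcharf0 // expr0n; case: (logn p #|F|) E => //= E'.
    by move: r1; rewrite E' expn0.
  case/dvdnP: hk => q eq.
  have : ((#|F| ^ k)%:R : F) = 1.
    have kp : (0 < #|F| ^ k)%N by rewrite expn_gt0 (ltnW r1).
    by rewrite -(prednK kp) -addn1 natrD eq natrM mF mulr0 add0r.
  by rewrite natrX r0 expr0n; case: (k) k0 => //= _ _ /eqP; rewrite eq_sym oner_eq0.
have [dk f1 Imf] := main_count F h hI m m0 hPhi mF k k0 hk hq.
have kerE := card_ker F h hI m m0 hPhi.
rewrite card_qfpoly dk -(prednK k0) expnSr in kerE.
have Z0 : #|[set z | lam F h hI m z == 0]| = (#|F| ^ k.-1)%N.
  by apply/eqP; rewrite -(eqn_pmul2r (ltnW r1)) kerE.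
have Z1 : #|[set z | lam F h hI m z != 0]| = (#|F| ^ k - #|F| ^ k.-1)%N.
  rewrite cardsCs card_qfpoly dk -Z0; congr (_ - _)%N.
  by apply: eq_card => z; rewrite !inE negbK.
have weight c : cyclic_code m h c -> c != 0 ->
    (hweight m c * (#|F| ^ k).-1 = m * (#|F| ^ k - #|F| ^ k.-1))%N.
  case=> a -> cn.
  have an : phi F h hI a != 0.
    rewrite phi_eq0; apply: contra cn => /dvdpP[a' ->].
    by rewrite -mulrA [h * _]mulrC divpK ?(h_dvd_M F h hI m m0 hPhi) // modp_mull.
  have := hweight_code F h hI m m0 hPhi mF k k0 hk hq a an.
  rewrite -Z1 /G => H.
  by rewrite hq mulnCA H mulnA -mNg.
split=> //; split=> [c1 c2 [a1 e1] [a2 e2] cn|//].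
have -> : hdist m c1 c2 = hweight m (c1 - c2).
  by apply: eq_card => i; rewrite !inE coefB subr_eq0.
apply: weight; last by rewrite subr_eq0.
exists (a1 - a2); rewrite e1 e2 mulrBl modpD; congr (_ + _); rewrite (modpN (a2 * _)) //.
Qed.
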